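(* Assume $FCA$. Then there is an entangled set of reals.
   Context: For $k\in\omega$, $t:k\to\{>,<\}$ and disjoint $a=\{a_0<\dots<a_{k-1}\}$, $b=\{b_0<\dots<b_{k-1}\}$ in $[\mathbb R]^k$ (increasing enumerations), $(a,b)$ realizes $t$ if $a_i\ t(i)\ b_i$ for every $i<k$. An uncountable $\mathcal E\subseteq\mathbb R$ is $k$-entangled if for every uncountable family $\mathcal A\subseteq[\mathcal E]^k$ of pairwise disjoint sets and every $t:k\to\{>,<\}$ there are $a\neq b$ in $\mathcal A$ such that $(a,b)$ realizes $t$; it is entangled if it is $k$-entangled for every $k\in\omega$. A type is a sequence $\tau=\{(m_k,n_{k+1},r_{k+1})\}_{k\in\omega}$ of natural numbers with $m_0=1$; $n_k\ge2$ for $k\ge1$; every $r\in\omega$ equals $r_k$ for infinitely many $k$; $m_k>r_{k+1}$; and $m_{k+1}=r_{k+1}+(m_k-r_{k+1})n_{k+1}$ for all $k$. For a set of ordinals $X$ and $\mathcal F\subseteq[X]^{<\omega}$, $\mathcal F_k$ is the set of elements of rank $k$ in $(\mathcal F,\subsetneq)$; $A\sqsubseteq B$ means $A\subseteq B$ and every element of $B$ below an element of $A$ is in $A$; $A<B$ means every element of $A$ is below every element of $B$. $\mathcal F$ is a construction scheme over $X$ of type $\tau$ if (1) every finite subset of $X$ lies in a member of $\mathcal F$; (2) $|F|=m_k$ for $F\in\mathcal F_k$; (3) $E\cap F\sqsubseteq E,F$ for $E,F\in\mathcal F_k$; (4) each $F\in\mathcal F_{k+1}$ is the union of uniquely determined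 $F_0,\dots,F_{n_{k+1}-1}\in\mathcal F_k$ forming a $\Delta$-system with root $R(F)$, $|R(F)|=r_{k+1}$, $R(F)<F_0\setminus R(F)<\dots<F_{n_{k+1}-1}\setminus R(F)$. For a construction scheme $\mathcal F$ over $\omega_1$, $l\ge1$, $F\in\mathcal F_l$ and finite $\mathcal C\subseteq[\omega_1]^{<\omega}$: $F$ fully captures $\mathcal C$ if $|\mathcal C|=n_l$ and $\mathcal C$ can be enumerated as $\{c_i\}_{i<n_l}$ with $c_i\subseteq F_i$, $c_i\setminus R(F)\neq\emptyset$ and $\phi_i[c_0]=c_i$ where $\phi_i:F_0\to F_i$ is the increasing bijection. $\mathcal F$ is fully capturing if for every uncountable $S\subseteq[\omega_1]^{<\omega}$ and every $k\in\omega$ there are a finite $\mathcal C\subseteq S$, $l>k$ and $F\in\mathcal F_l$ fully capturing $\mathcal C$. $FCA$ is the statement: for every type $\tau$ there is a fully capturing construction scheme over $\omega_1$ of type $\tau$. *)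

(* Defs.v *)
(* concrete reals R; finite sets represented by strictly
   increasing lists (their increasing enumerations). *)
From Stdlib Require Import Reals List Sorting.Sorted Arith.
Import ListNotations.
Set Implicit Arguments.

Definition countable_pred {T : Type} (P : T -> Prop) : Prop :=
  exists f : T -> nat, forall x y, P x -> P y -> f x = f y -> x = y.

Definition is_omega1 (W : Type) (lt : W -> W -> Prop) : Prop :=
  (forall x, ~ lt x x) /\
  (forall x y z, lt x y -> lt y z -> lt x z) /\
  (forall x y, lt x y \/ x = y \/ lt y x) /\
  well_founded lt /\
  ~ countable_pred (fun _ : W => True) /\
  (forall x, countable_pred (fun y => lt y x)).

(* Types tau = ((m_k, n_{k+1}, r_{k+1}))_k, given by three sequences;
   n 0 and r 0 are irrelevant. *)
Definition is_type (m n r : nat -> nat) : Prop :=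
  m 0 = 1 /\
  (forall k, 1 <= k -> 2 <= n k) /\
  (forall v N, exists k, N < k /\ r k = v) /\
  (forall k, r (S k) < m k) /\
  (forall k, m (S k) = r (S k) + (m k - r (S k)) * n (S k)).

Section FiniteSets.
Variable W : Type.
Variable lt : W -> W -> Prop.

Definition ssub (A B : list W) : Prop := incl A B /\ ~ incl B A.

Definition chain_below (Fam : list W -> Prop) (A : list W) (k : nat) : Prop :=
  exists c : nat -> list W,
    (forall i, i < k -> Fam (c i)) /\
    (forall i, S i < k -> ssub (c i) (c (S i))) /\
    (forall i, i < k -> ssub (c i) A).

Definition rank (Fam : list W -> Prop) (A : list W) (k : nat) : Prop :=
  Fam A /\ chain_below Fam A k /\ ~ chain_below Fam A (S k).

Definition cap_initial (E F : list W) : Prop :=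
  (forall x y, In x E -> In x F -> In y E -> lt y x -> In y F) /\
  (forall x y, In x E -> In x F -> In y F -> lt y x -> In y E).

Definition decomposition (Fam : list W -> Prop) (n r : nat -> nat) (k : nat)
    (F : list W) (Fs : nat -> list W) (R : list W) : Prop :=
  (forall i, i < n (S k) -> rank Fam (Fs i) k) /\
  (forall x, In x F <-> exists i, i < n (S k) /\ In x (Fs i)) /\
  (forall i j, i < n (S k) -> j < n (S k) -> i <> j ->
     forall x, (In x (Fs i) /\ In x (Fs j)) <-> In x R) /\
  Sorted lt R /\ length R = r (S k) /\
  (forall x y, In x R -> In y (Fs 0) -> ~ In y R -> lt x y) /\
  (forall i, S i < n (S k) -> forall x y,
     In x (Fs i) -> ~ In x R -> In y (Fs (S i)) -> ~ In y R -> lt x y).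

Definition construction_scheme (Fam : list W -> Prop) (m n r : nat -> nat) : Prop :=
  (forall A, Fam A -> Sorted lt A) /\
  (forall l : list W, exists A, Fam A /\ incl l A) /\
  (forall k A, rank Fam A k -> length A = m k) /\
  (forall k E F, rank Fam E k -> rank Fam F k -> cap_initial E F) /\
  (forall k F, rank Fam F (S k) ->
     exists Fs R, decomposition Fam n r k F Fs R /\
       (forall Gs R', decomposition Fam n r k F Gs R' ->
          forall i, i < n (S k) -> Gs i = Fs i)).

(* F in Fam_{k+1} fully captures C = {cs 0, ..., cs (n_{k+1}-1)}
   (the cs i pairwise distinct). The increasing bijection
   phi_i : Fs 0 -> Fs i sends the j-th element of Fs 0 to the j-th of Fs i. *)
Definition fully_captures (Fam : list W -> Prop) (n r : nat -> nat) (k : nat)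
    (F : list W) (cs : nat -> list W) : Prop :=
  (forall i j, i < n (S k) -> j < n (S k) -> cs i = cs j -> i = j) /\
  exists Fs R, decomposition Fam n r k F Fs R /\
    (forall i, i < n (S k) -> incl (cs i) (Fs i)) /\
    (forall i, i < n (S k) -> exists x, In x (cs i) /\ ~ In x R) /\
    (forall i j x y, i < n (S k) ->
       nth_error (Fs 0) j = Some x -> nth_error (Fs i) j = Some y ->
       (In x (cs 0) <-> In y (cs i))).

Definition fully_capturing (Fam : list W -> Prop) (n r : nat -> nat) : Prop :=
  forall Sf : list W -> Prop,
    (forall A, Sf A -> Sorted lt A) -> ~ countable_pred Sf ->
    forall k, exists l cs F,
      k <= l /\ (* l+1 > k *)
      (forall i, i < n (S l) -> Sf (cs i)) /\
      rank Fam F (S l) /\ fully_captures Fam n r l F cs.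

Definition FCA : Prop :=
  forall m n r : nat -> nat, is_type m n r ->
    exists Fam : list W -> Prop,
      construction_scheme Fam m n r /\ fully_capturing Fam n r.

End FiniteSets.

(* Entangled sets of reals. k-subsets of reals = strictly increasing
   lists of length k (their increasing enumerations). *)
Definition realizes (k : nat) (t : nat -> bool) (a b : list R) : Prop :=
  forall i x y, i < k -> nth_error a i = Some x -> nth_error b i = Some y ->
    if t i then Rgt x y else Rlt x y.

Definition k_entangled (E : R -> Prop) (k : nat) : Prop :=
  forall A : list R -> Prop,
    (forall a, A a -> length a = k /\ Sorted Rlt a /\ (forall x, In x a -> E x)) ->
    (forall a b, A a -> A b -> a <> b -> forall x, In x a -> ~ In x b) ->
    ~ countable_pred A ->
    forall t : nat -> bool, exists a b, A a /\ A b /\ a <> b /\ realizes k t a b.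

Definition entangled (E : R -> Prop) : Prop :=
  ~ countable_pred E /\ forall k, k_entangled E k.

(* Main.v *)
Require Import Defs.
From Stdlib Require Import Reals List Sorting.Sorted.
From Stdlib Require Import Arith Lia Lra Classical ClassicalEpsilon.
Import ListNotations.

Section SL.
Variable T : Type.
Variable lt : T -> T -> Prop.
Hypothesis irr : forall x, ~ lt x x.
Hypothesis trans : forall x y z, lt x y -> lt y z -> lt x z.

Lemma ss_in_lt {a l x} : StronglySorted lt (a :: l) -> In x l -> lt a x.
Proof. intros H Hx. inversion H; subst. rewrite Forall_forall in *. auto. Qed.

Lemma ss_eq l1 : forall l2, StronglySorted lt l1 -> StronglySorted lt l2 ->
  (forall x, In x l1 <-> In x l2) -> l1 = l2.
Proof.
  induction l1 as [|h1 t1 IH]; intros [|h2 t2] S1 S2 E.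
  - reflexivity.
  - exfalso. apply (proj2 (E h2)). now left.
  - exfalso. apply (proj1 (E h1)). now left.
  - assert (h1 = h2).
    { destruct (proj1 (E h1) (or_introl eq_refl)) as [e|i1]; auto.
      destruct (proj2 (E h2) (or_introl eq_refl)) as [e|i2]; auto.
      exfalso. apply (irr h1). eapply trans; [apply (ss_in_lt S1 i2)|apply (ss_in_lt S2 i1)]. }
    subst h2. f_equal. inversion S1; inversion S2; subst. apply IH; auto.
    intro x; split; intro Hx.
    + destruct (proj1 (E x) (or_intror Hx)) as [e|]; auto. subst.
      exfalso; apply (irr x); exact (ss_in_lt S1 Hx).
    + destruct (proj2 (E x) (or_intror Hx)) as [e|]; auto. subst.
      exfalso; apply (irr x); exact (ss_in_lt S2 Hx).
Qed.

Lemma ss_index l1 : forall l2 p1 p2 a, StronglySorted lt l1 -> StronglySorted lt l2 ->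
  nth_error l1 p1 = Some a -> nth_error l2 p2 = Some a ->
  (forall y, lt y a -> (In y l1 <-> In y l2)) -> p1 = p2.
Proof.
  induction l1 as [|h1 t1 IH]; intros l2 p1 p2 a S1 S2 N1 N2 E.
  - destruct p1; discriminate.
  - destruct l2 as [|h2 t2]; [destruct p2; discriminate|].
    destruct p1 as [|p1]; destruct p2 as [|p2]; simpl in *; auto.
    + injection N1 as ->. exfalso.
      assert (Ia : In a t2) by (eapply nth_error_In; eauto).
      pose proof (ss_in_lt S2 Ia) as L.
      destruct (proj2 (E h2 L) (or_introl eq_refl)) as [e|i]; [rewrite e in L; exact (irr _ L)|].
      apply (irr a). eapply trans; [exact (ss_in_lt S1 i)| exact L].
    + injection N2 as ->. exfalso.
      assert (Ia : In a t1) by (eapply nth_error_In; eauto).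
      pose proof (ss_in_lt S1 Ia) as L.
      destruct (proj1 (E h1 L) (or_introl eq_refl)) as [e|i]; [rewrite e in L; exact (irr _ L)|].
      apply (irr a). eapply trans; [exact (ss_in_lt S2 i)| exact L].
    + f_equal.
      assert (Ia1 : In a t1) by (eapply nth_error_In; eauto).
      assert (Ia2 : In a t2) by (eapply nth_error_In; eauto).
      pose proof (ss_in_lt S1 Ia1) as L1. pose proof (ss_in_lt S2 Ia2) as L2.
      assert (h1 = h2).
      { destruct (proj1 (E h1 L1) (or_introl eq_refl)) as [e|i1]; auto.
        destruct (proj2 (E h2 L2) (or_introl eq_refl)) as [e|i2]; auto.
        exfalso. apply (irr h1). eapply trans; [apply (ss_in_lt S1 i2)|apply (ss_in_lt S2 i1)]. }
      subst h2. inversion S1; inversion S2; subst.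
      eapply IH; eauto. intros y Hy; split; intro Hi.
      * destruct (proj1 (E y Hy) (or_intror Hi)) as [e|]; auto. subst.
        exfalso; apply (irr y); eapply ss_in_lt; [exact S1|exact Hi].
      * destruct (proj2 (E y Hy) (or_intror Hi)) as [e|]; auto. subst.
        exfalso; apply (irr y); eapply ss_in_lt; [exact S2|exact Hi].
Qed.

Lemma ss_prefix Rr : forall L, StronglySorted lt L -> StronglySorted lt Rr -> incl Rr L ->
  (forall x y, In x Rr -> In y L -> ~ In y Rr -> lt x y) ->
  L = Rr ++ skipn (length Rr) L.
Proof.
  induction Rr as [|a R' IH]; intros L SL SR Inc Ord.
  - reflexivity.
  - destruct L as [|h t].
    + exfalso. apply (Inc a). now left.
    + assert (h = a).
      { destruct (classic (In h (a :: R'))) as [Hh|Hh].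
        - destruct Hh as [e|Hh]; auto. exfalso.
          destruct (Inc a (or_introl eq_refl)) as [e|Ha]; [rewrite e in Hh; exact (irr _ (ss_in_lt SR Hh))|].
          apply (irr a). eapply trans; [exact (ss_in_lt SR Hh)|exact (ss_in_lt SL Ha)].
        - exfalso. pose proof (Ord a h (or_introl eq_refl) (or_introl eq_refl) Hh) as Lah.
          destruct (Inc a (or_introl eq_refl)) as [e|Ha]; [apply Hh; rewrite e; left; reflexivity|].
          apply (irr a). eapply trans; [exact Lah| exact (ss_in_lt SL Ha)]. }
      subst h. simpl. f_equal. inversion SL; inversion SR; subst. apply IH; auto.
      * intros x Hx. destruct (Inc x (or_intror Hx)) as [e|]; auto. subst.
        exfalso; apply (irr x); eapply ss_in_lt; [exact SR|exact Hx].
      * intros x y Hx Hy Hn. apply Ord; [right; exact Hx | right; exact Hy | ].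
        intros [e|Hy']; [rewrite <- e in Hy; exact (irr _ (ss_in_lt SL Hy)) | exact (Hn Hy')].
Qed.

Lemma ss_app l1 l2 : StronglySorted lt l1 -> StronglySorted lt l2 ->
  (forall x y, In x l1 -> In y l2 -> lt x y) -> StronglySorted lt (l1 ++ l2).
Proof.
  induction l1 as [|a l IH]; intros S1 S2 H; simpl; auto.
  inversion S1; subst. constructor.
  - apply IH; auto. intros; apply H; simpl; auto.
  - rewrite Forall_forall in *. intros x Hx. apply in_app_or in Hx as [Hx|Hx]; auto.
    apply H; simpl; auto.
Qed.

Lemma ss_nodup l : StronglySorted lt l -> NoDup l.
Proof.
  induction l as [|a l IH]; intro S; constructor.
  - intro Ha. apply (irr a). eapply ss_in_lt; eauto.
  - inversion S; auto.
Qed.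

Lemma ss_of_sorted l : Sorted lt l -> StronglySorted lt l.
Proof. apply Sorted_StronglySorted. intros x y z; apply trans. Qed.

Hypothesis tri : forall x y, lt x y \/ x = y \/ lt y x.

Lemma sort_insert s : StronglySorted lt s -> forall x, exists s', StronglySorted lt s' /\
  (forall y, In y s' <-> y = x \/ In y s).
Proof.
  induction s as [|h t IH]; intros S x.
  - exists [x]. split; [repeat constructor|]. simpl; intuition.
  - destruct (tri x h) as [L|[E|L]].
    + exists (x :: h :: t). split.
      * constructor; auto. constructor; auto. rewrite Forall_forall; intros z Hz.
        eapply trans; [exact L| exact (ss_in_lt S Hz)].
      * simpl; intuition.
    + subst. exists (h :: t). split; auto. simpl; intuition.
    + inversion S; subst. destruct (IH H1 x) as [t' [S' E']].
      exists (h :: t'). split.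
      * constructor; auto. rewrite Forall_forall in *; intros z Hz.
        destruct (proj1 (E' z) Hz) as [e|Hz']; subst; auto.
      * intro y; simpl; rewrite E'; intuition.
Qed.

Lemma sort_exists l : exists s, StronglySorted lt s /\ (forall x, In x s <-> In x l).
Proof.
  induction l as [|a l IH].
  - exists []; split; [constructor|simpl; intuition].
  - destruct IH as [s [S E]]. destruct (sort_insert _ S a) as [s' [S' E']].
    exists s'; split; auto. intro x; rewrite E', E; simpl; intuition.
Qed.
End SL.

Section Corr.
Variable T U : Type.
Variable ltT : T -> T -> Prop.
Variable ltU : U -> U -> Prop.
Hypothesis irrT : forall x, ~ ltT x x.
Hypothesis irrU : forall x, ~ ltU x x.
Hypothesis transT : forall x y z, ltT x y -> ltT y z -> ltT x z.
Hypothesis transU : forall x y z, ltU x y -> ltU y z -> ltU x z.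
Variable Q : T -> U -> Prop.

Lemma corr_nth a : forall b, StronglySorted ltT a -> StronglySorted ltU b ->
  (forall u, In u a -> exists v, In v b /\ Q u v) ->
  (forall v, In v b -> exists u, In u a /\ Q u v) ->
  (forall u v u' v', In u a -> In v b -> In u' a -> In v' b -> Q u v -> Q u' v' ->
     (ltT u u' <-> ltU v v')) ->
  forall p u v, nth_error a p = Some u -> nth_error b p = Some v -> Q u v.
Proof.
  induction a as [|u0 a' IH]; intros b Sa Sb Hab Hba Mon p u v Nu Nv.
  - destruct p; discriminate.
  - destruct b as [|v0 b']; [destruct p; discriminate|].
    assert (Q0 : Q u0 v0).
    { destruct (Hba v0 (or_introl eq_refl)) as [u1 [Iu1 Q1]].
      destruct Iu1 as [e|Iu1]; [subst; auto|].
      exfalso. destruct (Hab u0 (or_introl eq_refl)) as [w [Iw Qw]].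
      pose proof (ss_in_lt _ _ Sa Iu1) as L.
      assert (ltU w v0) by (apply (proj1 (Mon u0 w u1 v0 (or_introl eq_refl) Iw (or_intror Iu1) (or_introl eq_refl) Qw Q1)); auto).
      destruct Iw as [e|Iw]; subst; [eapply irrU; eauto|].
      apply (irrU v0). eapply transU; [exact (ss_in_lt _ _ Sb Iw)|eauto]. }
    destruct p as [|p]; simpl in Nu, Nv.
    + inversion Nu; inversion Nv; subst; auto.
    + inversion Sa; inversion Sb; subst.
      apply (IH b') with p; auto.
      * intros uu Hu. destruct (Hab uu (or_intror Hu)) as [w [Iw Qw]].
        exists w; split; auto. destruct Iw as [e|Iw]; auto. subst w. exfalso.
        pose proof (ss_in_lt _ _ Sa Hu) as L.
        apply (irrU v0). apply (proj1 (Mon u0 v0 uu v0 (or_introl eq_refl) (or_introl eq_refl) (or_intror Hu) (or_introl eq_refl) Q0 Qw)); auto.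
      * intros w Hw. destruct (Hba w (or_intror Hw)) as [uu [Iu Qu]].
        exists uu; split; auto. destruct Iu as [e|Iu]; auto. subst uu. exfalso.
        pose proof (ss_in_lt _ _ Sb Hw) as L.
        apply (irrT u0). apply (proj2 (Mon u0 v0 u0 w (or_introl eq_refl) (or_introl eq_refl) (or_introl eq_refl) (or_intror Hw) Q0 Qu)); auto.
      * intros; apply Mon; simpl; auto.
Qed.
End Corr.

Section Enc.
Variable b : nat -> nat.
Hypothesis b2 : forall k, (2 <= b k)%nat.

Fixpoint v (k : nat) : R := match k with 0 => 1%R | S k' => (v k' / INR (b k'))%R end.

Lemma binr_pos k : (0 < INR (b k))%R.
Proof. apply lt_0_INR. specialize (b2 k). lia. Qed.

Lemma v_pos k : (0 < v k)%R.
Proof. induction k; simpl. lra. apply Rdiv_lt_0_compat; auto. apply binr_pos. Qed.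

Lemma v_rel k : (INR (b k) * v (S k) = v k)%R.
Proof. simpl. field. apply Rgt_not_eq, binr_pos. Qed.

Lemma v_dec k : (v (S k) <= v k)%R.
Proof.
  rewrite <- (v_rel k). pose proof (v_pos (S k)). assert (2 <= INR (b k))%R.
  { replace 2%R with (INR 2) by (simpl; lra). apply le_INR, b2. }
  nra.
Qed.

Fixpoint Psum (g : nat -> nat) (N : nat) : R :=
  match N with 0 => 0%R | S N' => (Psum g N' + INR (g N') * v (S N'))%R end.

Section G.
Variable g : nat -> nat.
Hypothesis gb : forall k, (g k + 2 <= b k)%nat.

Lemma step_strict N : (Psum g (S N) + v (S N) <= Psum g N + v N - v (S N))%R.
Proof.
  change (Psum g (S N)) with (Psum g N + INR (g N) * v (S N))%R. rewrite <- (v_rel N). pose proof (v_pos (S N)).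
  assert (INR (g N) + 2 <= INR (b N))%R.
  { replace 2%R with (INR 2) by (simpl; lra). rewrite <- plus_INR. apply le_INR, gb. }
  nra.
Qed.

Lemma step_le N : (Psum g (S N) + v (S N) <= Psum g N + v N)%R.
Proof. pose proof (step_strict N). pose proof (v_pos (S N)). lra. Qed.

Lemma psum_mono M d : (Psum g M <= Psum g (M + d))%R.
Proof.
  induction d. rewrite Nat.add_0_r; lra.
  rewrite Nat.add_succ_r. change (Psum g (S (M+d))) with (Psum g (M+d) + INR (g (M+d)) * v (S (M+d)))%R. pose proof (v_pos (S (M + d))). pose proof (pos_INR (g (M+d))). nra.
Qed.

Lemma C_mono M d : (Psum g (M + d) + v (M + d) <= Psum g M + v M)%R.
Proof. induction d. rewrite Nat.add_0_r; lra. rewrite Nat.add_succ_r. pose proof (step_le (M + d)). lra. Qed.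

Lemma psum_bound N : (Psum g N + v N <= 1)%R.
Proof. pose proof (C_mono 0 N). simpl in H. lra. Qed.

Lemma psum_tail L N : (Psum g N <= Psum g (S L) + v (S L) - v (S (S L)))%R.
Proof.
  pose proof (v_dec (S L)).
  destruct (Nat.le_gt_cases N (S L)) as [Hc|Hc].
  - replace (S L) with (N + (S L - N))%nat by lia. pose proof (psum_mono N (S L - N)).
    replace (N + (S L - N))%nat with (S L) in * by lia. lra.
  - replace N with (S (S L) + (N - S (S L)))%nat by lia.
    pose proof (C_mono (S (S L)) (N - S (S L))). pose proof (step_strict (S L)).
    pose proof (v_pos (S (S L) + (N - S (S L)))). lra.
Qed.

Definition Xset : R -> Prop := fun y => exists N, y = Psum g N.

Lemma Xset_bound : bound Xset.
Proof. exists 1%R. intros y [N ->]. pose proof (psum_bound N). pose proof (v_pos N). lra. Qed.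

Lemma Xset_ne : exists y, Xset y.
Proof. exists 0%R, 0%nat. reflexivity. Qed.

Definition X : R := proj1_sig (completeness Xset Xset_bound Xset_ne).

Lemma X_ge N : (Psum g N <= X)%R.
Proof. unfold X. destruct completeness as [x [H1 H2]]. simpl. apply H1. exists N; auto. Qed.

Lemma X_le L : (X <= Psum g (S L) + v (S L) - v (S (S L)))%R.
Proof. unfold X. destruct completeness as [x [H1 H2]]. simpl. apply H2. intros y [N ->]. apply psum_tail. Qed.
End G.

Lemma psum_eq g g' L : (forall k, k < L -> g k = g' k)%nat -> Psum g L = Psum g' L.
Proof. induction L; intros H; simpl; auto. rewrite IHL by (intros; apply H; lia). rewrite H by lia. reflexivity. Qed.

Lemma X_lex g g' (gb : forall k, (g k + 2 <= b k)%nat) (gb' : forall k, (g' k + 2 <= b k)%nat) L :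
  (forall k, k < L -> g k = g' k)%nat -> (g L < g' L)%nat -> (X g gb < X g' gb')%R.
Proof.
  intros Heq Hlt. pose proof (X_le g gb L). pose proof (X_ge g' gb' (S L)).
  change (Psum g (S L)) with (Psum g L + INR (g L) * v (S L))%R in H.
  change (Psum g' (S L)) with (Psum g' L + INR (g' L) * v (S L))%R in H0.
  rewrite (psum_eq g g' L Heq) in *.
  assert (INR (g L) + 1 <= INR (g' L))%R by (rewrite <- S_INR; apply le_INR; lia).
  pose proof (v_pos (S L)). pose proof (v_pos (S (S L))). nra.
Qed.

Lemma first_diff (g g' : nat -> nat) l : (exists k, k <= l /\ g k <> g' k)%nat ->
  exists L, (L <= l /\ g L <> g' L /\ forall k, k < L -> g k = g' k)%nat.
Proof.
  induction l; intros [k [Hk Hd]].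
  - exists 0%nat. assert (k = 0)%nat by lia. subst. repeat split; auto. intros; lia.
  - destruct (classic (exists k, k <= l /\ g k <> g' k)%nat) as [E|E].
    + destruct (IHl E) as [L [? [? ?]]]. exists L; repeat split; auto.
    + exists (S l). repeat split; auto.
      * assert (k = S l)%nat; [|subst; auto]. destruct (Nat.eq_dec k (S l)); auto.
        exfalso; apply E; exists k; split; auto; lia.
      * intros j Hj. destruct (Nat.eq_dec (g j) (g' j)); auto. exfalso; apply E; exists j; split; auto; lia.
Qed.

Lemma X_inj g g' gb gb' : (exists k, g k <> g' k) -> X g gb <> X g' gb'.
Proof.
  intros [k Hk]. destruct (first_diff g g' k) as [L [_ [Hd Hb]]]; [exists k; auto|].
  destruct (proj1 (Nat.lt_gt_cases (g L) (g' L)) Hd) as [H|H].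
  - pose proof (X_lex g g' gb gb' L Hb H). lra.
  - assert (H0 : (forall j, j < L -> g' j = g j)%nat) by (intros; symmetry; auto).
    pose proof (X_lex g' g gb' gb L H0 H). lra.
Qed.

Lemma X_cmp g1 g1' g2 g2' gb1 gb1' gb2 gb2' l :
  (forall k, k <= l -> g1 k = g1' k)%nat -> (forall k, k <= l -> g2 k = g2' k)%nat ->
  (exists k, k <= l /\ g1 k <> g2 k)%nat ->
  ((X g1 gb1 < X g2 gb2)%R <-> (X g1' gb1' < X g2' gb2')%R).
Proof.
  intros E1 E2 D. destruct (first_diff g1 g2 l D) as [L [HL [Hd Hb]]].
  assert (Hb' : (forall k, k < L -> g1' k = g2' k)%nat).
  { intros k Hk. rewrite <- E1, <- E2 by lia. auto. }
  assert (g1' L = g1 L /\ g2' L = g2 L) as [e1 e2] by (split; symmetry; [apply E1|apply E2]; lia).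
  destruct (proj1 (Nat.lt_gt_cases (g1 L) (g2 L)) Hd) as [H|H].
  - pose proof (X_lex g1 g2 gb1 gb2 L Hb H).
    assert (H1 : (g1' L < g2' L)%nat) by lia.
    pose proof (X_lex g1' g2' gb1' gb2' L Hb' H1). split; intros; lra.
  - assert (H0 : (forall j, j < L -> g2 j = g1 j)%nat) by (intros; symmetry; auto).
    assert (H1 : (forall j, j < L -> g2' j = g1' j)%nat) by (intros; symmetry; auto).
    pose proof (X_lex g2 g1 gb2 gb1 L H0 H).
    assert (H3 : (g2' L < g1' L)%nat) by lia.
    pose proof (X_lex g2' g1' gb2' gb1' L H1 H3). split; intros; lra.
Qed.
End Enc.

Definition ee (k : nat) : nat := k - 2 ^ (Nat.log2 k).
Fixpoint mm (k : nat) : nat :=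
  match k with 0 => 1 | S k' => ee k' + (mm k' - ee k') * 2 ^ (mm k') end.
Definition nn (k : nat) : nat := match k with 0 => 2 | S k' => 2 ^ (mm k') end.
Definition rr (k : nat) : nat := match k with 0 => 0 | S k' => ee k' end.

Lemma ee_le k : ee k <= k.
Proof. unfold ee; lia. Qed.

Lemma mm_ge k : S k <= mm k.
Proof.
  induction k; simpl; [lia|].
  pose proof (ee_le k). pose proof (Nat.pow_gt_lin_r 2 (mm k) ltac:(lia)).
  assert (1 <= mm k - ee k) by lia. nia.
Qed.

Lemma ee_hit v N : exists k, N <= k /\ ee k = v.
Proof.
  exists (2 ^ (N + v + 1) + v). pose proof (Nat.pow_gt_lin_r 2 (N + v + 1) ltac:(lia)).
  split; [lia|]. unfold ee.
  rewrite (Nat.log2_unique (2 ^ (N + v + 1) + v) (N + v + 1)); [lia|lia|].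
  split; [lia|]. rewrite Nat.pow_succ_r'. lia.
Qed.

Lemma type_ok : is_type mm nn rr.
Proof.
  split; [reflexivity|]. split; [|split; [|split]].
  - intros [|k] Hk; [lia|]. simpl. pose proof (mm_ge k).
    pose proof (Nat.pow_le_mono_r 2 1 (mm k) ltac:(lia) ltac:(lia)). simpl in H0. lia.
  - intros v N. destruct (ee_hit v N) as [k [Hk E]]. exists (S k). split; [lia|]. exact E.
  - intro k. simpl. pose proof (ee_le k). pose proof (mm_ge k). lia.
  - intro k. reflexivity.
Qed.

Section Scheme.
Variables (W : Type) (lt : W -> W -> Prop).
Hypothesis irr : forall x, ~ lt x x.
Hypothesis trans : forall x y z, lt x y -> lt y z -> lt x z.
Variable Fam : list W -> Prop.
Variables m n r : nat -> nat.
Hypothesis Hss : forall A, Fam A -> StronglySorted lt A.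
Hypothesis Hlen : forall k A, rank Fam A k -> length A = m k.
Hypothesis Hcover : forall l : list W, exists A, Fam A /\ incl l A.
Hypothesis Hcap : forall k E F, rank Fam E k -> rank Fam F k -> cap_initial lt E F.
Hypothesis Hdec : forall k F, rank Fam F (S k) -> exists Fs R, decomposition lt Fam n r k F Fs R.
Hypothesis Hn2 : forall k, 2 <= n (S k).
Hypothesis Hrm : forall k, r (S k) < m k.
Hypothesis Hm : forall k, m (S k) = r (S k) + (m k - r (S k)) * n (S k).

Lemma rank_ss A k : rank Fam A k -> StronglySorted lt A.
Proof. intros [HA _]. auto. Qed.

Lemma rank_nodup A k : rank Fam A k -> NoDup A.
Proof. intro H. apply (ss_nodup _ _ irr). eapply rank_ss; eauto. Qed.

Section Struct.
Variables (k : nat) (F : list W) (Fs : nat -> list W) (R : list W).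
Hypothesis HF : rank Fam F (S k).
Hypothesis HD : decomposition lt Fam n r k F Fs R.

Local Notation N := (n (S k)).
Local Notation M := (m k).
Local Notation rho := (r (S k)).

Lemma D_rank i : i < N -> rank Fam (Fs i) k.
Proof. destruct HD as [H _]. auto. Qed.

Lemma D_len i : i < N -> length (Fs i) = M.
Proof. intro; apply Hlen, D_rank; auto. Qed.

Lemma D_ss i : i < N -> StronglySorted lt (Fs i).
Proof. intro; eapply rank_ss, D_rank; eauto. Qed.

Lemma D_R_ss : StronglySorted lt R.
Proof. destruct HD as [_ [_ [_ [H _]]]]. apply (ss_of_sorted _ _ trans); auto. Qed.

Lemma D_R_len : length R = rho.
Proof. destruct HD as [_ [_ [_ [_ [H _]]]]]. auto. Qed.

Lemma D_R_sub i : i < N -> incl R (Fs i).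
Proof.
  intros Hi x Hx. destruct HD as [_ [_ [H _]]].
  pose proof (Hn2 k). 
  destruct (Nat.eq_dec i 0) as [->|Hne].
  - apply (proj2 (H 0 1 ltac:(lia) ltac:(lia) ltac:(lia) x) Hx).
  - apply (proj2 (H i 0 Hi ltac:(lia) Hne x) Hx).
Qed.

Lemma D_out i : i < N -> exists z, In z (Fs i) /\ ~ In z R.
Proof.
  intro Hi. apply NNPP. intro C.
  assert (incl (Fs i) R).
  { intros z Hz. apply NNPP. intro Hn. apply C. exists z; auto. }
  pose proof (NoDup_incl_length (rank_nodup _ _ (D_rank i Hi)) H).
  rewrite D_len, D_R_len in H0 by auto. pose proof (Hrm k). lia.
Qed.

Lemma D_R_below i : i < N -> forall x y, In x R -> In y (Fs i) -> ~ In y R -> lt x y.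
Proof.
  destruct HD as [_ [_ [_ [_ [_ [H6 H7]]]]]].
  induction i; intros Hi x y Hx Hy Hn; auto.
  destruct (D_out i ltac:(lia)) as [z [Hz Hzn]].
  eapply trans; [apply (IHi ltac:(lia) x z); auto|]. apply (H7 i); auto.
Qed.

Lemma D_blocks i j : i < j -> j < N -> forall y z, In y (Fs i) -> ~ In y R -> In z (Fs j) -> ~ In z R -> lt y z.
Proof.
  destruct HD as [_ [_ [_ [_ [_ [H6 H7]]]]]].
  induction j; intros Hij Hj y z Hy Hyn Hz Hzn; [lia|].
  destruct (Nat.eq_dec i j) as [->|Hne].
  - apply (H7 j); auto.
  - destruct (D_out j ltac:(lia)) as [w [Hw Hwn]].
    eapply trans; [apply (IHj ltac:(lia) ltac:(lia) y w); auto|]. apply (H7 j); auto.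
Qed.

Definition TT i := skipn rho (Fs i).

Lemma D_split i : i < N -> Fs i = R ++ TT i.
Proof.
  intro Hi. unfold TT. rewrite <- D_R_len.
  apply (ss_prefix _ _ irr trans); auto using D_ss, D_R_ss, D_R_sub.
  intros x y Hx Hy Hn. eapply D_R_below; eauto.
Qed.

Lemma TT_len i : i < N -> length (TT i) = M - rho.
Proof. intro Hi. unfold TT. rewrite length_skipn, D_len; auto. Qed.

Lemma TT_in i x : i < N -> In x (TT i) -> In x (Fs i) /\ ~ In x R.
Proof.
  intros Hi Hx. pose proof (rank_nodup _ _ (D_rank i Hi)) as ND. rewrite (D_split i Hi) in ND |- *.
  split; [apply in_or_app; auto|].
  intro HR. apply in_split in Hx as [l1 [l2 E]]. rewrite E in ND.
  rewrite app_assoc in ND. apply NoDup_remove_2 in ND. apply ND. apply in_or_app; left; apply in_or_app; auto.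
Qed.

Lemma TT_ss i : i < N -> StronglySorted lt (TT i).
Proof.
  intro Hi. pose proof (D_ss i Hi). rewrite (D_split i Hi) in H.
  clear -H. induction R; simpl in *; auto. inversion H; auto.
Qed.

Fixpoint catT j := match j with 0 => [] | S j' => catT j' ++ TT j' end.

Lemma catT_len j : j <= N -> length (catT j) = j * (M - rho).
Proof. induction j; intros; simpl; auto. rewrite length_app, IHj, TT_len by lia. lia. Qed.

Lemma catT_in j x : In x (catT j) <-> exists i, i < j /\ In x (TT i).
Proof.
  induction j; simpl. split; [tauto|intros [i [Hi _]]; lia].
  rewrite in_app_iff, IHj. split.
  - intros [[i [Hi H]]|H]; [exists i; split; auto; lia| exists j; auto].
  - intros [i [Hi H]]. destruct (Nat.eq_dec i j) as [->|]; auto. left; exists i; split; auto; lia.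
Qed.

Lemma catT_ss j : j <= N -> StronglySorted lt (catT j).
Proof.
  induction j; intros Hj; simpl; [constructor|].
  apply (ss_app _ _); [apply IHj; lia| apply TT_ss; lia|].
  intros x y Hx Hy. apply catT_in in Hx as [i [Hi Hx]].
  apply TT_in in Hx as [Hx Hxn]; [|lia]. apply TT_in in Hy as [Hy Hyn]; [|lia].
  eapply (D_blocks i j); eauto; lia.
Qed.

Lemma F_eq : F = R ++ catT N.
Proof.
  apply (ss_eq _ _ irr trans).
  - eapply rank_ss; eauto.
  - apply (ss_app _ _); auto using D_R_ss, catT_ss.
    intros x y Hx Hy. apply catT_in in Hy as [i [Hi Hy]]. apply TT_in in Hy as [Hy Hyn]; auto.
    eapply D_R_below; eauto.
  - destruct HD as [_ [H2 _]]. intro x. rewrite H2, in_app_iff, catT_in. split.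
    + intros [i [Hi Hx]]. rewrite (D_split i Hi), in_app_iff in Hx. destruct Hx; auto. right; exists i; auto.
    + pose proof (Hn2 k). intros [Hx|[i [Hi Hx]]].
      * exists 0. split. lia. apply (D_R_sub 0); auto. lia.
      * exists i. split; auto. apply TT_in; auto.
Qed.

Lemma catT_nth j i q : j <= N -> i < j -> q < M - rho ->
  nth_error (catT j) (i * (M - rho) + q) = nth_error (TT i) q.
Proof.
  induction j; intros Hj Hi Hq; [lia|]. simpl.
  destruct (Nat.eq_dec i j) as [->|Hne].
  - rewrite nth_error_app2; rewrite catT_len by lia; [|lia]. f_equal. lia.
  - rewrite nth_error_app1; [apply IHj; lia|]. rewrite catT_len by lia. nia.
Qed.

Lemma S_up i j y : i < N -> rho <= j -> nth_error (Fs i) j = Some y ->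
  nth_error F (rho + i * (M - rho) + (j - rho)) = Some y /\ ~ In y R.
Proof.
  intros Hi Hj E. assert (j < M) by (rewrite <- (D_len i Hi); apply nth_error_Some; congruence).
  rewrite (D_split i Hi) in E. rewrite nth_error_app2 in E by (rewrite D_R_len; lia).
  rewrite D_R_len in E.
  split.
  - rewrite F_eq, nth_error_app2 by (rewrite D_R_len; nia). rewrite D_R_len.
    replace (rho + i * (M - rho) + (j - rho) - rho) with (i * (M - rho) + (j - rho)) by (set (z := i * (M - rho)); lia).
    rewrite catT_nth; auto; lia.
  - apply nth_error_In in E. apply (TT_in i); auto.
Qed.

Lemma S_low i j : i < N -> j < rho -> nth_error (Fs i) j = nth_error F j.
Proof.
  intros Hi Hj. rewrite F_eq, (D_split i Hi), !nth_error_app1; auto; rewrite D_R_len; auto.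
Qed.

Definition hfun (P : nat) := if P <? rho then P else rho + (P - rho) mod (M - rho).

Lemma S_desc P a : nth_error F P = Some a -> exists i, i < N /\ nth_error (Fs i) (hfun P) = Some a.
Proof.
  intro E. pose proof (Hn2 k). pose proof (Hrm k).
  assert (HP : P < m (S k)) by (rewrite <- (Hlen _ _ HF); apply nth_error_Some; congruence).
  rewrite Hm in HP. 
  unfold hfun. destruct (Nat.ltb_spec P rho).
  - exists 0. split; [lia|]. rewrite S_low; auto; lia.
  - set (i := (P - rho) / (M - rho)). set (q := (P - rho) mod (M - rho)).
    assert (Pe : P - rho = (M - rho) * i + q) by (apply Nat.div_mod; lia).
    assert (q < M - rho) by (apply Nat.mod_upper_bound; lia).
    assert (i < N) by nia.
    exists i. split; auto. rewrite F_eq, nth_error_app2 in E by (rewrite D_R_len; lia).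
    rewrite D_R_len in E. replace (P - rho) with (i * (M - rho) + q) in E by lia.
    rewrite catT_nth in E by lia.
    rewrite (D_split i), nth_error_app2 by (auto; rewrite D_R_len; lia). rewrite D_R_len.
    replace (rho + q - rho) with q by lia. auto.
Qed.
End Struct.

Definition pos (k : nat) (a : W) : nat :=
  epsilon (inhabits 0) (fun p => exists G, rank Fam G k /\ nth_error G p = Some a).

Lemma pos_spec k G p a : rank Fam G k -> nth_error G p = Some a -> pos k a = p.
Proof.
  intros HG E. unfold pos.
  destruct (epsilon_spec (inhabits 0) (fun p => exists G, rank Fam G k /\ nth_error G p = Some a))
    as [G' [HG' E']]; [exists p, G; auto|].
  symmetry. apply (ss_index _ _ irr trans G G' _ _ a); eauto using rank_ss.
  destruct (Hcap k G G' HG HG') as [c1 c2].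
  assert (IG : In a G) by (eapply nth_error_In; eauto).
  assert (IG' : In a G') by (eapply nth_error_In; eauto).
  intros y Hy; split; intro Hi; [apply (c1 a y)|apply (c2 a y)]; auto.
Qed.

Fixpoint Hc (l : nat) (d : nat) (j : nat) : nat :=
  match d with 0 => j | S d' => Hc l d' (hfun (l + d') j) end.

Lemma pos_iter d : forall l G j a, rank Fam G (l + d) -> nth_error G j = Some a -> pos l a = Hc l d j.
Proof.
  induction d; intros l G j a HG E; simpl.
  - rewrite Nat.add_0_r in HG. eapply pos_spec; eauto.
  - rewrite Nat.add_succ_r in HG. destruct (Hdec _ _ HG) as [Fs [R HD]].
    destruct (S_desc _ _ _ _ HG HD j a E) as [i [Hi Ei]].
    eapply IHd; [|exact Ei]. eapply D_rank; eauto.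
Qed.

Lemma pos_same l G G' j a a' : rank Fam G l -> rank Fam G' l ->
  nth_error G j = Some a -> nth_error G' j = Some a' -> forall k, k <= l -> pos k a = pos k a'.
Proof.
  intros HG HG' E E' k Hk.
  replace l with (k + (l - k)) in HG, HG' by lia.
  rewrite (pos_iter _ _ _ _ _ HG E), (pos_iter _ _ _ _ _ HG' E'). reflexivity.
Qed.

Definition bitf (k P : nat) : bool :=
  match k with 0 => false
  | S k' => Nat.testbit ((P - r k) / (m k' - r k)) (r k + (P - r k) mod (m k' - r k)) end.

Definition gdig (a : W) (k : nat) : nat :=
  (if bitf k (pos k a) then m k else 0) + Nat.min (pos k a) (m k - 1).

Definition bb (k : nat) : nat := 2 * m k + 2.
Lemma bb2 k : 2 <= bb k. Proof. unfold bb; lia. Qed.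
Lemma gdig_bound a k : gdig a k + 2 <= bb k.
Proof. unfold gdig, bb. destruct bitf; lia. Qed.

Definition Xw (a : W) : R := X bb bb2 (gdig a) (gdig_bound a).

Lemma gdig_same l G G' j a a' : rank Fam G l -> rank Fam G' l ->
  nth_error G j = Some a -> nth_error G' j = Some a' -> forall k, k <= l -> gdig a k = gdig a' k.
Proof. intros. unfold gdig. rewrite (pos_same l G G' j a a'); auto. Qed.

Lemma pos_lt k G j a : rank Fam G k -> nth_error G j = Some a -> j < m k.
Proof. intros HG E. rewrite <- (Hlen _ _ HG). apply nth_error_Some. congruence. Qed.

Lemma P2 l G G' j1 j2 y1 y2 y1' y2' : rank Fam G l -> rank Fam G' l ->
  nth_error G j1 = Some y1 -> nth_error G j2 = Some y2 ->
  nth_error G' j1 = Some y1' -> nth_error G' j2 = Some y2' ->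
  (Rlt (Xw y1) (Xw y2) <-> Rlt (Xw y1') (Xw y2')).
Proof.
  intros HG HG' E1 E2 E1' E2'.
  destruct (Nat.eq_dec j1 j2) as [<-|Hne].
  - rewrite E1 in E2. rewrite E1' in E2'. injection E2 as <-. injection E2' as <-.
    split; intro H; exfalso; exact (Rlt_irrefl _ H).
  - unfold Xw. apply X_cmp with l.
    + intros k Hk. exact (gdig_same l G G' j1 y1 y1' HG HG' E1 E1' k Hk).
    + intros k Hk. exact (gdig_same l G G' j2 y2 y2' HG HG' E2 E2' k Hk).
    + exists l. split; auto. unfold gdig.
      rewrite (pos_spec l G j1 y1), (pos_spec l G j2 y2); auto.
      pose proof (pos_lt l G j1 y1 HG E1). pose proof (pos_lt l G j2 y2 HG E2).
      destruct bitf, bitf; lia.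
Qed.

Lemma P1 l F Fs Rt i i' j y y' : rank Fam F (S l) -> decomposition lt Fam n r l F Fs Rt ->
  i < n (S l) -> i' < n (S l) -> r (S l) <= j ->
  nth_error (Fs i) j = Some y -> nth_error (Fs i') j = Some y' ->
  Nat.testbit i j = true -> Nat.testbit i' j = false -> Rlt (Xw y') (Xw y).
Proof.
  intros HF HD Hi Hi' Hj E E' B B'.
  pose proof (D_rank _ _ _ _ HD i Hi) as Ri.
  pose proof (D_rank _ _ _ _ HD i' Hi') as Ri'.
  pose proof (pos_lt _ _ _ _ Ri E) as Hjm.
  pose proof (Hrm l). pose proof (Hn2 l). pose proof (Hm l).
  unfold Xw. apply X_lex with (S l).
  - intros k Hk. eapply gdig_same; [exact Ri'|exact Ri|exact E'|exact E|lia].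
  - destruct (S_up _ _ _ _ HF HD i j y Hi Hj E) as [EF _].
    destruct (S_up _ _ _ _ HF HD i' j y' Hi' Hj E') as [EF' _].
    unfold gdig. rewrite (pos_spec _ _ _ _ HF EF), (pos_spec _ _ _ _ HF EF').
    assert (Hb : forall ii, bitf (S l) (r (S l) + ii * (m l - r (S l)) + (j - r (S l))) = Nat.testbit ii j).
    { intro ii. simpl bitf.
      set (P := r (S l) + ii * (m l - r (S l)) + (j - r (S l))).
      assert (e : P - r (S l) = (m l - r (S l)) * ii + (j - r (S l))) by (unfold P; nia).
      rewrite e. rewrite <- (Nat.div_unique _ _ ii (j - r (S l))) by lia.
      rewrite <- (Nat.mod_unique _ _ ii (j - r (S l))) by lia.
      f_equal. lia. }
    rewrite !Hb, B, B'. assert (1 <= m l - r (S l)) by lia. assert (1 <= m (S l)) by nia. lia.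
Qed.

Lemma gdig_diff l G j1 j2 y1 y2 : rank Fam G l -> nth_error G j1 = Some y1 -> nth_error G j2 = Some y2 ->
  j1 <> j2 -> gdig y1 l <> gdig y2 l.
Proof.
  intros HG E1 E2 Hne. unfold gdig.
  rewrite (pos_spec l G j1 y1), (pos_spec l G j2 y2); auto.
  pose proof (pos_lt l G j1 y1 HG E1). pose proof (pos_lt l G j2 y2 HG E2).
  destruct bitf, bitf; lia.
Qed.

Lemma chain_len A k : Fam A -> chain_below Fam A k -> k <= length A.
Proof.
  intros HA [c [H1 [H2 H3]]]. destruct k; [lia|].
  assert (forall i, i < S k -> i <= length (c i)).
  { induction i; intros Hi; [lia|].
    assert (length (c i) < length (c (S i))); [|specialize (IHi ltac:(lia)); lia].
    destruct (H2 i Hi) as [I1 I2]. destruct (Nat.lt_ge_cases (length (c i)) (length (c (S i)))) as [|Hge]; auto.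
    exfalso. apply I2. apply NoDup_length_incl; auto.
    apply (ss_nodup _ _ irr). apply Hss, H1. lia. }
  specialize (H k ltac:(lia)). destruct (H3 k ltac:(lia)) as [I1 I2].
  destruct (Nat.lt_ge_cases (length (c k)) (length A)) as [|Hge]; [lia|].
  exfalso. apply I2. apply NoDup_length_incl; auto.
  apply (ss_nodup _ _ irr). apply Hss, H1. lia.
Qed.

Lemma rank_exists A : Fam A -> exists k, rank Fam A k.
Proof.
  intro HA.
  assert (Hgen : forall N, chain_below Fam A 0 -> ~ chain_below Fam A N ->
    exists k, chain_below Fam A k /\ ~ chain_below Fam A (S k)).
  { induction N; intros H0 HN; [contradiction|].
    destruct (classic (chain_below Fam A N)) as [C|C]; eauto. }
  destruct (Hgen (S (length A))) as [k [C1 C2]].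
  - exists (fun _ => A). repeat split; intros; lia.
  - intro C. apply chain_len in C; auto. lia.
  - exists k. split; auto.
Qed.

Lemma Xw_inj a b : a <> b -> Xw a <> Xw b.
Proof.
  intro Hne. unfold Xw. apply X_inj.
  destruct (Hcover [a; b]) as [A [HA Hinc]].
  destruct (rank_exists A HA) as [k Hk].
  destruct (In_nth_error A a (Hinc a ltac:(simpl; auto))) as [p Ep].
  destruct (In_nth_error A b (Hinc b ltac:(simpl; auto))) as [q Eq].
  exists k. apply (gdig_diff k A p q); auto. intro; subst. congruence.
Qed.
End Scheme.

Lemma bits_exist M (f : nat -> bool) : exists i, i < 2 ^ M /\ forall j, j < M -> Nat.testbit i j = f j.
Proof.
  induction M.
  - exists 0. split; [simpl; lia|intros; lia].
  - destruct IHM as [i' [Hi' Hb]].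
    exists (i' + (if f M then 2 ^ M else 0)). split.
    + rewrite Nat.pow_succ_r'. destruct (f M); lia.
    + intros j Hj. assert (P : 0 < 2 ^ M) by (apply Nat.neq_0_lt_0, Nat.pow_nonzero; lia).
      destruct (Nat.eq_dec j M) as [->|Hne].
      * rewrite Nat.testbit_eqb.
        rewrite <- (Nat.div_unique (i' + (if f M then 2 ^ M else 0)) (2 ^ M) (if f M then 1 else 0) i') by (auto; destruct (f M); lia).
        destruct (f M); reflexivity.
      * rewrite <- (Nat.mod_pow2_bits_low _ M j) by lia.
        rewrite <- (Nat.mod_unique (i' + (if f M then 2 ^ M else 0)) (2 ^ M) (if f M then 1 else 0) i') by (auto; destruct (f M); lia).
        apply Hb. lia.
Qed.

Lemma preimg (W : Type) (h : W -> R) (a : list R) :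
  (forall y, In y a -> exists b, h b = y) -> exists l, forall y, In y a <-> exists b, In b l /\ h b = y.
Proof.
  induction a as [|y0 a IH]; intros H.
  - exists []. intro y; simpl; split; [tauto|intros [b [[] _]]].
  - destruct IH as [l Hl]; [intros; apply H; simpl; auto|].
    destruct (H y0 (or_introl eq_refl)) as [b0 Hb0].
    exists (b0 :: l). intro y; simpl; rewrite Hl; split.
    + intros [<-|[b [Hb Eb]]]; [exists b0; split; auto|exists b; split; auto].
    + intros [b [[<-|Hb] Eb]]; [left; congruence|right; exists b; split; auto].
Qed.

Section Main.
Variables (W : Type) (lt : W -> W -> Prop).
Hypothesis irr : forall x, ~ lt x x.
Hypothesis trans : forall x y z, lt x y -> lt y z -> lt x z.
Hypothesis tri : forall x y, lt x y \/ x = y \/ lt y x.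
Hypothesis unc : ~ countable_pred (fun _ : W => True).
Variable Fam : list W -> Prop.
Hypothesis Hsch : construction_scheme lt Fam mm nn rr.
Hypothesis Hcapt : fully_capturing lt Fam nn rr.

Lemma Hss : forall A, Fam A -> StronglySorted lt A.
Proof. destruct Hsch as [H _]. intros A HA. apply (ss_of_sorted _ _ trans). auto. Qed.
Lemma Hcover : forall l : list W, exists A, Fam A /\ incl l A.
Proof. destruct Hsch as [_ [H _]]. auto. Qed.
Lemma Hlen : forall k A, rank Fam A k -> length A = mm k.
Proof. destruct Hsch as [_ [_ [H _]]]. auto. Qed.
Lemma Hcap : forall k E F, rank Fam E k -> rank Fam F k -> cap_initial lt E F.
Proof. destruct Hsch as [_ [_ [_ [H _]]]]. auto. Qed.
Lemma Hdec : forall k F, rank Fam F (S k) -> exists Fs R, decomposition lt Fam nn rr k F Fs R.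
Proof. destruct Hsch as [_ [_ [_ [_ H]]]]. intros k F HF. destruct (H k F HF) as [Fs [R [HD _]]]. eauto. Qed.
Lemma Hn2 : forall k, 2 <= nn (S k).
Proof. destruct type_ok as [_ [H _]]. intro k; apply H; lia. Qed.
Lemma Hrm : forall k, rr (S k) < mm k.
Proof. destruct type_ok as [_ [_ [_ [H _]]]]. auto. Qed.
Lemma Hm : forall k, mm (S k) = rr (S k) + (mm k - rr (S k)) * nn (S k).
Proof. destruct type_ok as [_ [_ [_ [_ H]]]]. auto. Qed.

Definition XX := Xw W Fam mm rr.
Definition EE : R -> Prop := fun y => exists a, XX a = y.

Lemma XX_inj a b : XX a = XX b -> a = b.
Proof.
  intro E. destruct (classic (a = b)) as [|Hne]; auto.
  exfalso. exact (Xw_inj W lt irr trans Fam mm rr Hss Hlen Hcover Hcap a b Hne E).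
Qed.

Lemma EE_unc : ~ countable_pred EE.
Proof.
  intros [f Hf]. apply unc. exists (fun a => f (XX a)). intros a b _ _ E.
  apply XX_inj. apply Hf; auto; eexists; eauto.
Qed.

Lemma P2' l G G' j1 j2 y1 y2 y1' y2' : rank Fam G l -> rank Fam G' l ->
  nth_error G j1 = Some y1 -> nth_error G j2 = Some y2 ->
  nth_error G' j1 = Some y1' -> nth_error G' j2 = Some y2' ->
  (Rlt (XX y1) (XX y2) <-> Rlt (XX y1') (XX y2')).
Proof. apply (P2 W lt irr trans Fam mm nn rr Hss Hlen Hcap Hdec Hn2 Hrm Hm). Qed.

Lemma P1' l F Fs Rt i i' j y y' : rank Fam F (S l) -> decomposition lt Fam nn rr l F Fs Rt ->
  i < nn (S l) -> i' < nn (S l) -> rr (S l) <= j ->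
  nth_error (Fs i) j = Some y -> nth_error (Fs i') j = Some y' ->
  Nat.testbit i j = true -> Nat.testbit i' j = false -> Rlt (XX y') (XX y).
Proof. apply (P1 W lt irr trans Fam mm nn rr Hss Hlen Hcap Hdec Hn2 Hrm Hm). Qed.

Lemma ent K : k_entangled EE K.
Proof.
  intros A HA Hdisj Hunc t.
  destruct K as [|K'].
  { exfalso. apply Hunc. exists (fun _ => 0). intros a b Ha Hb _.
    destruct (HA a Ha) as [La _]. destruct (HA b Hb) as [Lb _].
    destruct a; [|discriminate]. destruct b; [|discriminate]. reflexivity. }
  set (Corr := fun (s : list W) (a : list R) => forall y, In y a <-> exists b, In b s /\ XX b = y).
  set (Sf := fun s => StronglySorted lt s /\ exists a, A a /\ Corr s a).
  assert (HAss : forall a, A a -> StronglySorted Rlt a).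
  { intros a Ha. apply (ss_of_sorted _ _ Rlt_trans). apply (HA a Ha). }
  assert (ex_s : forall a, A a -> exists s, StronglySorted lt s /\ Corr s a).
  { intros a Ha. destruct (preimg W XX a) as [l0 Hl0].
    - intros y Hy. apply (HA a Ha). exact Hy.
    - destruct (sort_exists _ _ trans tri l0) as [s [Ss Es]].
      exists s. split; auto. intro y. rewrite Hl0. split; intros [b [Hb Eb]]; exists b; split; auto; apply Es; auto. }
  assert (HSf_sorted : forall s, Sf s -> Sorted lt s).
  { intros s [Hs _]. apply StronglySorted_Sorted; auto. }
  assert (HSf_unc : ~ countable_pred Sf).
  { intros [f Hf]. apply Hunc.
    exists (fun a => f (epsilon (inhabits []) (fun s => StronglySorted lt s /\ Corr s a)) ).
    intros a b Ha Hb E.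
    destruct (epsilon_spec (inhabits []) (fun s => StronglySorted lt s /\ Corr s a) (ex_s a Ha)) as [Sa Ca].
    destruct (epsilon_spec (inhabits []) (fun s => StronglySorted lt s /\ Corr s b) (ex_s b Hb)) as [Sb Cb].
    set (sa := epsilon (inhabits []) (fun s => StronglySorted lt s /\ Corr s a)) in *.
    set (sb := epsilon (inhabits []) (fun s => StronglySorted lt s /\ Corr s b)) in *.
    assert (sa = sb) as Eab.
    { apply Hf; auto; [split; auto; exists a; auto|split; auto; exists b; auto]. }
    rewrite <- Eab in Cb.
    apply (ss_eq _ _ Rlt_irrefl Rlt_trans); auto. intro y. rewrite (Ca y), (Cb y). tauto. }
  destruct (Hcapt Sf HSf_sorted HSf_unc 0) as [l [cs [F [_ [HcsS [HF [Hdist [Fs [Rt [HD [Hincl [Hout Hphi]]]]]]]]]]]].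

  set (N := nn (S l)) in *.
  assert (HN : N = 2 ^ mm l) by reflexivity.
  assert (Hn0 : 0 < N) by (pose proof (Hn2 l); unfold N; lia).
  assert (Rk : forall i, i < N -> rank Fam (Fs i) l) by (intros; eapply D_rank; eauto).
  assert (Ln : forall i, i < N -> length (Fs i) = mm l) by (intros; apply Hlen, Rk; auto).
  set (aa := fun i => epsilon (inhabits []) (fun a => A a /\ Corr (cs i) a)).
  assert (Haa : forall i, i < N -> A (aa i) /\ Corr (cs i) (aa i)).
  { intros i Hi. apply (epsilon_spec (inhabits []) (fun a => A a /\ Corr (cs i) a)).
    destruct (HcsS i Hi) as [_ [a [Ha Ca]]]. exists a; auto. }
  set (J := fun j => exists z, nth_error (Fs 0) j = Some z /\ In z (cs 0)).
  assert (Hex : forall i i' j x, i < N -> i' < N -> nth_error (Fs i) j = Some x -> exists y, nth_error (Fs i') j = Some y).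
  { intros i i' j x Hi Hi' E. destruct (nth_error (Fs i') j) as [y|] eqn:Ey; eauto.
    exfalso. apply nth_error_None in Ey. rewrite Ln in Ey by auto.
    assert (j < length (Fs i)) by (apply nth_error_Some; congruence). rewrite Ln in H by auto. lia. }
  set (Q := fun i u v => exists j z y, J j /\ nth_error (Fs 0) j = Some z /\ XX z = u /\
                                     nth_error (Fs i) j = Some y /\ XX y = v).
  assert (HQ : forall i, i < N -> forall p u v, nth_error (aa 0) p = Some u -> nth_error (aa i) p = Some v -> Q i u v).
  { intros i Hi. destruct (Haa 0 Hn0) as [A0 C0]. destruct (Haa i Hi) as [Ai Ci].
    apply (corr_nth R R Rlt Rlt Rlt_irrefl Rlt_irrefl Rlt_trans (Q i)); auto.
    - intros u Hu. apply C0 in Hu as [z [Hz <-]].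
      destruct (In_nth_error _ _ (Hincl 0 Hn0 z Hz)) as [j Ej].
      destruct (Hex 0 i j z Hn0 Hi Ej) as [y Ey].
      exists (XX y). split.
      + apply Ci. exists y. split; auto. apply (proj1 (Hphi i j z y Hi Ej Ey)); auto.
      + exists j, z, y. repeat split; auto. exists z; auto.
    - intros v Hv. apply Ci in Hv as [y [Hy <-]].
      destruct (In_nth_error _ _ (Hincl i Hi y Hy)) as [j Ej].
      destruct (Hex i 0 j y Hi Hn0 Ej) as [z Ez].
      assert (Iz : In z (cs 0)) by (apply (proj2 (Hphi i j z y Hi Ez Ej)); auto).
      exists (XX z). split.
      + apply C0. exists z. split; auto.
      + exists j, z, y. repeat split; auto. exists z; auto.
    - intros u v u' v' _ _ _ _ [j [z [y [_ [Ez [<- [Ey <-]]]]]]] [j' [z' [y' [_ [Ez' [<- [Ey' <-]]]]]]].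
      apply (P2' l (Fs 0) (Fs i) j j'); auto. }
  set (fJ := fun j => if excluded_middle_informative (J j) then true else false).
  set (fT := fun j => if excluded_middle_informative
      (exists p z, nth_error (Fs 0) j = Some z /\ nth_error (aa 0) p = Some (XX z) /\ t p = true) then true else false).
  destruct (bits_exist (mm l) (fun j => andb (fJ j) (fT j))) as [i1 [Hi1 B1]].
  destruct (bits_exist (mm l) (fun j => andb (fJ j) (negb (fT j)))) as [i2 [Hi2 B2]].
  rewrite <- HN in Hi1, Hi2.
  destruct (Hout 0 Hn0) as [x0 [Hx0 _]].
  destruct (In_nth_error _ _ (Hincl 0 Hn0 x0 Hx0)) as [j0 Ej0].
  assert (Hj0 : j0 < mm l) by (exact (pos_lt W Fam mm Hlen l (Fs 0) j0 x0 (Rk 0 Hn0) Ej0)).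
  assert (fJ0 : fJ j0 = true).
  { unfold fJ. destruct excluded_middle_informative as [|C]; auto. exfalso; apply C; exists x0; auto. }
  assert (Hne : i1 <> i2).
  { intro E. subst i2. pose proof (B1 j0 Hj0). pose proof (B2 j0 Hj0). rewrite fJ0 in *.
    destruct (fT j0); simpl in *; congruence. }
  destruct (Haa i1 Hi1) as [A1 C1]. destruct (Haa i2 Hi2) as [A2 C2].
  assert (Hab : aa i1 <> aa i2).
  { intro E. apply Hne. apply Hdist; auto.
    destruct (HcsS i1 Hi1) as [S1 _]. destruct (HcsS i2 Hi2) as [S2 _].
    apply (ss_eq _ _ irr trans); auto. intro w; split; intro Hw.
    - assert (In (XX w) (aa i2)) by (rewrite <- E; apply C1; exists w; auto).
      apply C2 in H as [w' [Hw' Ew]]. apply XX_inj in Ew. subst; auto.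
    - assert (In (XX w) (aa i1)) by (rewrite E; apply C2; exists w; auto).
      apply C1 in H as [w' [Hw' Ew]]. apply XX_inj in Ew. subst; auto. }
  exists (aa i1), (aa i2). split; [auto|split; [auto|split; [auto|]]].
  intros p x y Hp Ex Ey.
  destruct (Haa 0 Hn0) as [A0 C0].
  destruct (nth_error (aa 0) p) as [u0|] eqn:Eu0.
  2:{ exfalso. apply nth_error_None in Eu0. destruct (HA _ A0) as [L0 _]. lia. }
  destruct (HQ i1 Hi1 p u0 x Eu0 Ex) as [j [z1 [y1 [Jj [Ez1 [Xz1 [Ey1 Xy1]]]]]]].
  destruct (HQ i2 Hi2 p u0 y Eu0 Ey) as [j' [z2 [y2 [_ [Ez2 [Xz2 [Ey2 Xy2]]]]]]].
  assert (z1 = z2) by (apply XX_inj; congruence). subst z2.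
  assert (j = j').
  { pose proof (rank_nodup W lt irr Fam Hss _ _ (Rk 0 Hn0)) as ND.
    apply (proj1 (NoDup_nth_error _) ND); [apply nth_error_Some; congruence|congruence]. }
  subst j'.
  assert (Hj : j < mm l) by (exact (pos_lt W Fam mm Hlen l (Fs 0) j z1 (Rk 0 Hn0) Ez1)).
  assert (fJj : fJ j = true) by (unfold fJ; destruct excluded_middle_informative; auto; contradiction).
  assert (fTj : fT j = t p).
  { unfold fT. destruct excluded_middle_informative as [[p' [z' [Ez' [Ep' Tp']]]]|C].
    - rewrite Ez1 in Ez'. injection Ez' as <-. rewrite Xz1 in Ep'.
      assert (p' = p).
      { pose proof (ss_nodup _ _ Rlt_irrefl _ (HAss _ A0)) as ND.
        apply (proj1 (NoDup_nth_error _) ND); [apply nth_error_Some; congruence|congruence]. }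
      subst; auto.
    - destruct (t p) eqn:Tp; auto. exfalso. apply C. exists p, z1. repeat split; auto. congruence. }
  pose proof (B1 j Hj) as Bj1. pose proof (B2 j Hj) as Bj2. simpl in Bj1, Bj2.
  rewrite fJj, fTj in Bj1, Bj2. simpl in Bj1, Bj2.
  assert (Hr : rr (S l) <= j).
  { destruct (Nat.lt_ge_cases j (rr (S l))) as [Hlt|]; auto. exfalso.
    rewrite (S_low W lt irr trans Fam mm nn rr Hss Hlen Hn2 Hrm l F Fs Rt HF HD i1 j Hi1 Hlt) in Ey1.
    rewrite (S_low W lt irr trans Fam mm nn rr Hss Hlen Hn2 Hrm l F Fs Rt HF HD i2 j Hi2 Hlt) in Ey2.
    rewrite Ey1 in Ey2. injection Ey2 as <-.
    apply (Hdisj (aa i1) (aa i2) A1 A2 Hab x); [eapply nth_error_In; eauto|].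
    replace x with y by congruence. eapply nth_error_In; eauto. }
  destruct (t p).
  - unfold Rgt. rewrite <- Xy1, <- Xy2.
    apply (P1' l F Fs Rt i1 i2 j y1 y2); auto.
  - rewrite <- Xy1, <- Xy2.
    apply (P1' l F Fs Rt i2 i1 j y2 y1); auto.
Qed.

End Main.

Theorem mainTheorem7 (W : Type) (lt : W -> W -> Prop) :
  is_omega1 lt -> FCA lt -> exists E : R -> Prop, entangled E.
Proof.
  intros [irr [trans [tri [_ [unc _]]]]] Hfca.
  destruct (Hfca mm nn rr type_ok) as [Fam [Hsch Hcapt]].
  exists (EE W Fam). split.
  - eapply EE_unc; eauto.
  - intro K. eapply ent; eauto.
Qed.
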